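(* Let $k\ge1$ and $n$ be integers. For the graph $G(n,k)$ the following are equivalent: (A) $G(n,k)$ has no cycles; (B) both $k-1$ and $(n-3)_{k+1}$ lie in the tail; (C) both $0$ and $(n-1)_{k+1}$ lie in the tail; (D) both $0$ and $k-1$ lie in the tail.
   Context: For an integer $\ell$, $\ell_k$ and $\ell_{k+1}$ denote the least nonnegative residues of $\ell$ modulo $k$ and $k+1$. $G(n,k)$ is the directed graph on vertices $0,1,\dots,k$ whose edges are exactly the $k$ edges $(i+n-2)_{k+1}\to(i+n-1)_k$, $1\le i\le k$; a loop $a\to a$ counts as a cycle. Vertex $k$ has in-degree $0$, vertex $(n-2)_{k+1}$ has out-degree $0$, and all other vertices have in- and out-degree $1$, so $G(n,k)$ is a disjoint union of directed cycles and one directed path, the tail, from $k$ to $(n-2)_{k+1}$ (consisting of the single vertex $k$ if $k=(n-2)_{k+1}$). *)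

(* Defs.v *)
From mathcomp Require Import all_boot all_order all_algebra.
Set Implicit Arguments. Unset Strict Implicit. Unset Printing Implicit Defensive.
Import Order.TTheory GRing.Theory Num.Theory.
Local Open Scope ring_scope.

Definition res (l : int) (m : nat) : int := (l %% m%:Z)%Z.

(* Edge relation of G(n,k) on vertices (integers; all edge endpoints lie in {0..k}):
   the k edges (i+n-2)_{k+1} -> (i+n-1)_k, 1 <= i <= k. *)
Definition Gedge (n : int) (k : nat) : rel int :=
  fun a b => [exists i : 'I_k,
     (a == res (i.+1%:Z + n - 2) k.+1) && (b == res (i.+1%:Z + n - 1) k)].

(* G(n,k) has a (directed) cycle: a nonempty closed walk; a loop a -> a counts. *)
Definition has_cycle (n : int) (k : nat) : Prop :=
  exists s : seq int, s != [::] /\ cycle (Gedge n k) s.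

(* v lies in the tail: the directed path starting at vertex k, i.e. v is
   reachable from k by a directed walk (possibly empty). *)
Definition in_tail (n : int) (k : nat) (v : int) : Prop :=
  exists s : seq int, path (Gedge n k) k%:Z s /\ last k%:Z s = v.

(* Main.v *)
Require Import Defs.
From mathcomp Require Import all_boot all_order all_algebra.
From mathcomp Require Import zify ring lra.
From Stdlib Require Import Classical.
Set Implicit Arguments. Unset Strict Implicit. Unset Printing Implicit Defensive.
Import Order.TTheory GRing.Theory Num.Theory.
Local Open Scope ring_scope.


Lemma res_bounds (l : int) (m : nat) : (0 < m)%N -> 0 <= res l m < m%:Z.
Proof.
move=> hm; rewrite /res modz_ge0 ?ltz_pmod //; lia.
Qed.

Lemma res_eq (l : int) (m : nat) : l = ((l %/ m%:Z)%Z) * m%:Z + res l m.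
Proof. exact: divz_eq. Qed.

Lemma resP (l q r : int) (m : nat) : l = q * m%:Z + r -> 0 <= r < m%:Z -> res l m = r.
Proof. by move=> -> hr; rewrite /res modzMDl modz_small. Qed.

Lemma res_shift (l q : int) (m : nat) : res (l + q * m%:Z) m = res l m.
Proof. by rewrite /res addrC modzMDl. Qed.

Definition zz k (n : int) := res (n - 2) k.+1.
Definition QQ k (n : int) := ((n - 2) %/ k.+1%:Z)%Z.
Definition FF k n (a : int) := res ((if zz k n < a then a - 1 else a) + QQ k n + 2) k.
Definition inV (k : nat) (v : int) := (0 <= v) && (v <= k%:Z).

Lemma GedgeP k n a b : (0 < k)%N ->
  Gedge n k a b <-> [/\ inV k a, a != zz k n & b = FF k n a].
Proof.
move=> hk; have hQ := res_eq (n - 2) k.+1.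
have hz := res_bounds (n - 2) (ltn0Sn k).
rewrite -/(zz k n) -/(QQ k n) in hQ hz.
rewrite /FF /inV; split.
- case/existsP=> i /andP[/eqP ha /eqP hb].
  have hi := ltn_ord i.
  case: (boolP (zz k n + i.+1%:Z <= k%:Z)) => hc.
  + have ea : a = zz k n + i.+1%:Z.
      by rewrite ha; apply: (@resP _ (QQ k n)); lia.
    have -> : zz k n < a by lia.
    split; [lia|lia|].
    rewrite hb -[in RHS](res_shift _ (QQ k n)); congr res; lia.
  + have ea : a = zz k n + i.+1%:Z - k.+1%:Z.
      by rewrite ha; apply: (@resP _ (QQ k n + 1)); lia.
    have -> : (zz k n < a) = false by lia.
    split; [lia|lia|].
    rewrite hb -[in RHS](res_shift _ (QQ k n + 1)); congr res; lia.
- case=> /andP[ha0 hak] haz ->.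
  case: (boolP (zz k n < a)) => hc.
  + have hi : (absz (a - zz k n - 1)%R < k)%N by lia.
    apply/existsP; exists (Ordinal hi); rewrite /=; apply/andP; split; apply/eqP.
    * symmetry; apply: (@resP _ (QQ k n)); lia.
    * rewrite -[in LHS](res_shift _ (QQ k n)); congr res; lia.
  + have hi : (absz (a - zz k n + k%:Z)%R < k)%N by lia.
    apply/existsP; exists (Ordinal hi); rewrite /=; apply/andP; split; apply/eqP.
    * symmetry; apply: (@resP _ (QQ k n + 1)); lia.
    * rewrite -[in LHS](res_shift _ (QQ k n + 1)); congr res; lia.
Qed.


Lemma FF_range k n a : (0 < k)%N -> 0 <= FF k n a <= k%:Z - 1.
Proof. move=> hk; have := res_bounds ((if zz k n < a then a - 1 else a) + QQ k n + 2) hk; rewrite /FF; lia. Qed.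

Lemma zz_range k n : 0 <= zz k n <= k%:Z.
Proof. have := res_bounds (n - 2) (ltn0Sn k); rewrite /zz; lia. Qed.

Lemma res_inj_small (x y : int) k : (0 < k)%N -> res x k = res y k ->
  0 < x - y + k%:Z -> x - y < k%:Z -> x = y.
Proof.
move=> hk e h1 h2; have hx := res_eq x k; have hy := res_eq y k.
rewrite e in hx.
set q1 := (x %/ k%:Z)%Z in hx; set q2 := (y %/ k%:Z)%Z in hy.
have hd : x - y = (q1 - q2) * k%:Z by rewrite mulrBl; lia.
have hk' : 0 < k%:Z by lia.
case: (ltrgtP (q1 - q2) 0) => hq.
- have : (q1 - q2) * k%:Z <= - k%:Z.
    have : q1 - q2 <= -1 by lia.
    move=> h; have := ler_pM2r hk'; nia.
  lia.
- have : k%:Z <= (q1 - q2) * k%:Z by nia.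
  lia.
- move: hd; rewrite hq mul0r; lia.
Qed.

Lemma FF_inj k n a b : (0 < k)%N -> inV k a -> inV k b -> a != zz k n -> b != zz k n ->
  FF k n a = FF k n b -> a = b.
Proof.
move=> hk; rewrite /inV /FF => ha hb haz hbz e.
have hz := zz_range k n.
have := res_inj_small hk e.
case: (boolP (zz k n < a)) => hca; case: (boolP (zz k n < b)) => hcb; lia.
Qed.

Lemma res_pred (y : int) k : (0 < k)%N -> 1 <= res y k -> res (y - 1) k = res y k - 1.
Proof.
move=> hk h; have hy := res_eq y k; have hb := res_bounds y hk.
apply: (@resP _ ((y %/ k%:Z)%Z)); lia.
Qed.

Lemma res_succ (y : int) k : (0 < k)%N -> res y k <= k%:Z - 2 -> res (y + 1) k = res y k + 1.
Proof.
move=> hk h; have hy := res_eq y k; have hb := res_bounds y hk.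
apply: (@resP _ ((y %/ k%:Z)%Z)); lia.
Qed.

Lemma FF_down k n x : (0 < k)%N -> x != zz k n -> 1 <= x -> x - 1 != zz k n ->
  1 <= FF k n x -> FF k n (x - 1) = FF k n x - 1.
Proof.
move=> hk hxz hx1 hxz1; rewrite /FF => h; rewrite -res_pred //; congr res.
case: (boolP (zz k n < x)) => hc; case: (boolP (zz k n < x - 1)) => hc'; lia.
Qed.

Lemma FF_up k n x : (0 < k)%N -> x != zz k n -> x + 1 != zz k n ->
  FF k n x <= k%:Z - 2 -> FF k n (x + 1) = FF k n x + 1.
Proof.
move=> hk hxz hxz1; rewrite /FF => h; rewrite -res_succ //; congr res.
case: (boolP (zz k n < x)) => hc; case: (boolP (zz k n < x + 1)) => hc'; lia.
Qed.


Definition it k n i (a : int) := iter i (FF k n) a.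
Definition iT k n (v : int) := exists i, (forall j, (j < i)%N -> it k n j k%:Z != zz k n)
   /\ it k n i k%:Z = v.
Arguments it : simpl never.

Lemma itS k n i a : it k n i.+1 a = it k n i (FF k n a).
Proof. by rewrite /it iterSr. Qed.

Lemma itSl k n i a : it k n i.+1 a = FF k n (it k n i a).
Proof. by []. Qed.

Lemma itD k n i j a : it k n (i + j) a = it k n i (it k n j a).
Proof. by rewrite /it iterD. Qed.

Lemma inV_it k n j a : (0 < k)%N -> inV k a -> inV k (it k n j a).
Proof.
move=> hk ha; case: j => [|j] //; rewrite itSl.
have := FF_range n (it k n j a) hk; rewrite /inV; lia.
Qed.

Lemma it_le k n j a : (0 < k)%N -> (0 < j)%N -> 0 <= it k n j a <= k%:Z - 1.
Proof. by move=> hk; case: j => [|j] // _; rewrite itSl; apply: FF_range. Qed.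

Lemma path_iter k n a s : (0 < k)%N -> path (Gedge n k) a s ->
  (forall j, (j < size s)%N -> inV k (it k n j a) /\ it k n j a != zz k n)
  /\ last a s = it k n (size s) a.
Proof.
move=> hk; elim: s a => [|b s IH] a /=; first by split.
case/andP=> /(GedgeP _ _ _ hk) [ha haz ->] /IH [h1 h2]; split.
- case=> [|j] hj; first by split.
  by rewrite itS; apply: h1.
- by rewrite h2 itS.
Qed.

Lemma mkseqSl (T : Type) (f : nat -> T) L : mkseq f L.+1 = f 0%N :: mkseq (fun i => f i.+1) L.
Proof.
rewrite /mkseq /=; congr (_ :: _).
by rewrite -[1%N]addn0 iotaDl -map_comp.
Qed.

Lemma iter_path k n a L : (0 < k)%N ->
  (forall j, (j < L)%N -> inV k (it k n j a) /\ it k n j a != zz k n) ->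
  path (Gedge n k) a (mkseq (fun i => it k n i.+1 a) L)
  /\ last a (mkseq (fun i => it k n i.+1 a) L) = it k n L a.
Proof.
move=> hk; elim: L a => [|L IH] a h; first by split.
rewrite mkseqSl /=.
have [ha haz] := h 0%N isT.
have h' : forall j, (j < L)%N -> inV k (it k n j (FF k n a)) /\ it k n j (FF k n a) != zz k n.
  by move=> j hj; rewrite -itS; apply: h.
have [p l] := IH _ h'.
have e : mkseq (fun i => it k n i.+2 a) L = mkseq (fun i => it k n i.+1 (FF k n a)) L.
  by apply: eq_mkseq => i; rewrite itS.
rewrite e; split.
- by rewrite p andbT; apply/(GedgeP _ _ _ hk).
- by rewrite l itS.
Qed.


Lemma inVk k : inV k k%:Z.
Proof. rewrite /inV; lia. Qed.

Lemma tail_iff k n v : (0 < k)%N -> in_tail n k v <-> iT k n v.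
Proof.
move=> hk; split.
- case=> s [p l]; have [h1 h2] := path_iter hk p.
  exists (size s); split; last by rewrite -h2.
  by move=> j /h1 [].
- case=> i [h e]; rewrite -e.
  have [p l] := @iter_path k n k%:Z i hk (fun j hj => conj (inV_it n j hk (inVk k)) (h j hj)).
  by exists (mkseq (fun i0 => it k n i0.+1 k%:Z) i).
Qed.

Lemma cyc_iff k n : (0 < k)%N -> has_cycle n k <->
  exists x L, [/\ (0 < L)%N, inV k x, it k n L x = x &
                  forall j, (j < L)%N -> it k n j x != zz k n].
Proof.
move=> hk; split.
- case=> [[|x s]] [] // _ p.
  have [h1 h2] := path_iter hk p.
  move: h1 h2; rewrite size_rcons last_rcons => h1 h2.
  exists x, (size s).+1; split => //.
  + by have [] := h1 0%N isT.
  + by move=> j /h1 [].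
- case=> x [L [hL hx e h]].
  have h' : forall j, (j < L)%N -> inV k (it k n j x) /\ it k n j x != zz k n.
    by move=> j hj; split; [apply: inV_it | apply: h].
  have [p l] := iter_path hk h'.
  exists (x :: mkseq (fun i => it k n i.+1 x) L.-1); split => //=.
  rewrite /cycle.
  have -> : rcons (mkseq (fun i => it k n i.+1 x) L.-1) x = mkseq (fun i => it k n i.+1 x) L.
    by rewrite -{2}(prednK hL) mkseqS prednK // e.
  exact: p.
Qed.


Lemma cancel_it k n a b : (0 < k)%N -> (a < b)%N ->
  (forall j, (j < b)%N -> it k n j k%:Z != zz k n) -> it k n a k%:Z != it k n b k%:Z.
Proof.
move=> hk; elim: a b => [|a IH] b hab h.
- have := it_le n k%:Z hk hab; rewrite /it /=; apply: contraTneq => <-; lia.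
- case: b hab h => [|b] // hab h; rewrite !itSl; apply: contraNneq (IH b hab _) => [e|j hj].
  + apply/eqP; apply: (FF_inj hk _ _ _ _ e).
    * exact: inV_it (inVk k).
    * exact: inV_it (inVk k).
    * by apply: h; lia.
    * by apply: h.
  + by apply: h; lia.
Qed.

Lemma PH k (g : nat -> int) N : (forall j, (j < N)%N -> inV k (g j)) -> (k.+1 < N)%N ->
  exists a b, [/\ (a < b)%N, (b < N)%N & g a = g b].
Proof.
move=> hg hN.
have : ~~ uniq (mkseq g N).
  apply/negP => U.
  have sub : {subset mkseq g N <= [seq i%:Z | i <- iota 0 k.+1]}.
    move=> v /mapP [j]; rewrite mem_iota add0n => /andP [_ hj] ->.
    have := hg j hj; rewrite /inV => /andP [h0 h1].
    apply/mapP; exists (absz (g j)); last by lia.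
    rewrite mem_iota; apply/andP; split => //; lia.
  have := uniq_leq_size U sub; rewrite size_mkseq size_map size_iota; lia.
case/(uniqPn 0) => a [b [hab hb]]; rewrite size_mkseq in hb.
rewrite !nth_mkseq //; last by apply: ltn_trans hab hb.
by move=> e; exists a, b.
Qed.

Lemma hit k n : (0 < k)%N -> exists h, it k n h k%:Z = zz k n /\
  forall j, (j < h)%N -> it k n j k%:Z != zz k n.
Proof.
move=> hk.
have [ex|nex] := boolP [exists j : 'I_k.+2, it k n j k%:Z == zz k n].
- have ex' : exists j, it k n j k%:Z == zz k n by case/existsP: ex => j hj; exists j.
  case: (find_ex_minn ex') => h /eqP hh hmin; exists h; split => // j hj.
  by apply/negP => /hmin; rewrite leqNgt hj.
- have hall : forall j, (j < k.+2)%N -> it k n j k%:Z != zz k n.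
    move=> j hj; apply/negP => e; move/negP: nex; apply; apply/existsP.
    by exists (Ordinal hj).
  have [a [b [hab hb e]]] := @PH k (fun j => it k n j k%:Z) k.+2
     (fun j _ => inV_it n j hk (inVk k)) (ltnSn _).
  have := @cancel_it k n a b hk hab (fun j hj => hall j (ltn_trans hj hb)).
  by rewrite e eqxx.
Qed.

Lemma iT_z k n : (0 < k)%N -> iT k n (zz k n).
Proof. by move=> hk; have [h [e hj]] := hit n hk; exists h. Qed.

Lemma U_closed k n x : (0 < k)%N -> inV k x -> ~ iT k n x -> ~ iT k n (FF k n x).
Proof.
move=> hk hx hnx [[|i] [hj e]].
- have := FF_range n x hk. rewrite -e => hr. 
  have e0 : it k n 0 k%:Z = k%:Z by [].
  rewrite e0 in hr. clear -hr. lia.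
- have hxz : x != zz k n.
    by apply/negP => /eqP ez; apply: hnx; rewrite ez; apply: iT_z.
  apply: hnx; exists i; split; first by move=> j hji; apply: hj; lia.
  rewrite itSl in e.
  apply: (FF_inj hk _ hx _ hxz e).
  + exact: inV_it (inVk k).
  + by apply: hj.
Qed.

Lemma U_orbit k n x j : (0 < k)%N -> inV k x -> ~ iT k n x ->
  [/\ ~ iT k n (it k n j x), inV k (it k n j x) & it k n j x != zz k n].
Proof.
move=> hk hx hnx.
have h1 : ~ iT k n (it k n j x).
  elim: j => [|j IH] //; rewrite itSl; apply: U_closed => //; exact: inV_it.
split => //; first exact: inV_it.
by apply/negP => /eqP ez; apply: h1; rewrite ez; apply: iT_z.
Qed.

Lemma all_tail k n v : (0 < k)%N -> ~ has_cycle n k -> inV k v -> iT k n v.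
Proof.
move=> hk hnc hv; apply: NNPP => hnv; apply: hnc; apply/(cyc_iff n hk).
have [a [b [hab hb e]]] := @PH k (fun j => it k n j v) k.+2
   (fun j _ => inV_it n j hk hv) (ltnSn _).
exists (it k n a v), (b - a)%N; split.
- by rewrite subn_gt0.
- exact: inV_it.
- by rewrite -itD subnK ?e // ltnW.
- move=> j _; have [hx' _ _] := U_orbit a hk hv hnv.
  by have [_ _ ->] := U_orbit j hk (inV_it n a hk hv) hx'.
Qed.


Definition hitp k n h := it k n h k%:Z = zz k n /\
  forall j, (j < h)%N -> it k n j k%:Z != zz k n.

Lemma iT_bound k n h v : hitp k n h -> iT k n v ->
  exists i, [/\ (i <= h)%N, it k n i k%:Z = v & forall j, (j < i)%N -> it k n j k%:Z != zz k n].
Proof.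
move=> [hh hj] [i [hi e]]; exists i; split => //.
rewrite leqNgt; apply/negP => hlt; by move: (hi h hlt); rewrite hh eqxx.
Qed.

Lemma iT_of k n h i : hitp k n h -> (i <= h)%N -> iT k n (it k n i k%:Z).
Proof.
move=> [hh hj] hi; exists i; split => // j hji; apply: hj; exact: leq_trans hji hi.
Qed.

Lemma it_period k n x L q r : it k n L x = x -> it k n (q * L + r) x = it k n r x.
Proof.
move=> e; elim: q => [|q IH] //.
by rewrite mulSn -addnA addnC itD e IH.
Qed.

Lemma cyc_notT k n : (0 < k)%N -> has_cycle n k -> exists x, inV k x /\ ~ iT k n x.
Proof.
move=> hk /(cyc_iff n hk) [x [L [hL hx e hz]]]; exists x; split => //.
case=> i [hi ei]; have [h [hh hj]] := hit n hk.
case: (ltnP h i) => hhi.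
- by move: (hi h hhi); rewrite hh eqxx.
- have : it k n (h - i) x = zz k n by rewrite -ei -itD subnK.
  rewrite (divn_eq (h - i) L) it_period // => ez.
  by move: (hz _ (ltn_pmod (h - i) hL)); rewrite ez eqxx.
Qed.

Lemma iT_dec k n h v : hitp k n h ->
  iT k n v <-> has (fun i => it k n i k%:Z == v) (iota 0 h.+1).
Proof.
move=> hp; split.
- move/(iT_bound hp) => [i [hi e _]]; apply/hasP; exists i; last by apply/eqP.
  by rewrite mem_iota.
- case/hasP => i; rewrite mem_iota add0n ltnS => /andP [_ hi] /eqP <-.
  exact: iT_of hp hi.
Qed.

Lemma ex_min_max k n : (0 < k)%N -> (exists y, inV k y /\ ~ iT k n y) ->
  exists m M, [/\ inV k m /\ ~ iT k n m, (forall y, inV k y -> ~ iT k n y -> m <= y),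
                  inV k M /\ ~ iT k n M & (forall y, inV k y -> ~ iT k n y -> y <= M)].
Proof.
move=> hk [y0 [hy0 hny0]].
have [h hp] := hit n hk.
pose P := fun j : nat => (j <= k)%N && ~~ has (fun i => it k n i k%:Z == j%:Z) (iota 0 h.+1).
have conv : forall y, inV k y -> ~ iT k n y -> P (absz y).
  move=> y hy hny; rewrite /P; apply/andP; split; first by move: hy; rewrite /inV; lia.
  apply/negP => /(iT_dec _ hp); have -> : (absz y)%:Z = y by move: hy; rewrite /inV; lia.
  exact: hny.
have back : forall j, P j -> inV k j%:Z /\ ~ iT k n j%:Z.
  move=> j /andP [hj hn]; split; first by rewrite /inV; lia.
  by move/(iT_dec _ hp); apply/negP.
have exP : exists j, P j by exists (absz y0); apply: conv.
have ubP : forall j, P j -> (j <= k)%N by move=> j /andP [].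
case: (find_ex_minn exP) => mn hmn hmin.
case: (ex_maxnP exP ubP) => mx hmx hmax.
exists mn%:Z, mx%:Z; split.
- exact: back.
- move=> y hy hny; have := hmin _ (conv y hy hny); move: hy; rewrite /inV; lia.
- exact: back.
- move=> y hy hny; have := hmax _ (conv y hy hny); move: hy; rewrite /inV; lia.
Qed.


Lemma notT_ne k n x y : ~ iT k n x -> iT k n y -> x != y.
Proof. by move=> hx hy; apply/negP => /eqP e; apply: hx; rewrite e. Qed.

Lemma chain_down k n h m a : (0 < k)%N -> hitp k n h -> iT k n 0 ->
  inV k m -> ~ iT k n m -> it k n a k%:Z = m - 1 -> (a <= h)%N ->
  forall i, (i <= h - a)%N -> it k n i (m - 1) = it k n i m - 1.
Proof.
move=> hk hp h0 hm hnm ea ha; elim=> [|i IH] hi //.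
have hi' : (i <= h - a)%N by apply: ltnW.
have [hx1 hx2 hx3] := U_orbit i hk hm hnm.
have [hy1 hy2 hy3] := U_orbit i.+1 hk hm hnm.
have hx0 := notT_ne hx1 h0.
have hy0 := notT_ne hy1 h0.
rewrite !itSl IH //; apply: FF_down => //.
- move: hx2; rewrite /inV; lia.
- rewrite -IH // -ea -itD; case: hp => _; apply; lia.
- rewrite -itSl; move: hy2; rewrite /inV; lia.
Qed.

Lemma chain_up k n h M b : (0 < k)%N -> hitp k n h -> iT k n (k%:Z - 1) ->
  inV k M -> ~ iT k n M -> it k n b k%:Z = M + 1 -> (b <= h)%N ->
  forall i, (i <= h - b)%N -> it k n i (M + 1) = it k n i M + 1.
Proof.
move=> hk hp hk1 hM hnM eb hb; elim=> [|i IH] hi //.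
have hi' : (i <= h - b)%N by apply: ltnW.
have [hx1 hx2 hx3] := U_orbit i hk hM hnM.
have [hy1 hy2 hy3] := U_orbit i.+1 hk hM hnM.
have hy0 := notT_ne hy1 hk1.
rewrite !itSl IH //; apply: FF_up => //.
- rewrite -IH // -eb -itD; case: hp => _; apply; lia.
- rewrite -itSl; have := FF_range n (it k n i M) hk; rewrite -itSl; lia.
Qed.


Lemma iTk k n : iT k n k%:Z.
Proof. by exists 0%N. Qed.

Lemma resm3 k n : 1 <= zz k n -> res (n - 3) k.+1 = zz k n - 1.
Proof.
move=> h; have hQ := res_eq (n - 2) k.+1; have hz := zz_range k n.
rewrite -/(zz k n) in hQ; apply: (@resP _ ((n - 2) %/ k.+1%:Z)%Z); lia.
Qed.

Lemma resm1 k n : zz k n <= k%:Z - 1 -> res (n - 1) k.+1 = zz k n + 1.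
Proof.
move=> h; have hQ := res_eq (n - 2) k.+1; have hz := zz_range k n.
rewrite -/(zz k n) in hQ; apply: (@resP _ ((n - 2) %/ k.+1%:Z)%Z); lia.
Qed.

Lemma get_max k n h M : (0 < k)%N -> hitp k n h -> iT k n (k%:Z - 1) ->
  inV k M -> (forall y, inV k y -> ~ iT k n y -> y <= M) -> ~ iT k n M ->
  M <= k%:Z - 2 /\ exists b, [/\ (b <= h)%N, it k n b k%:Z = M + 1 &
     forall j, (j < b)%N -> it k n j k%:Z != zz k n].
Proof.
move=> hk hp hk1 hM hmax hnM.
have n1 := notT_ne hnM hk1; have n2 := notT_ne hnM (iTk k n).
have hle : M <= k%:Z - 2 by move: hM; rewrite /inV; lia.
split => //; apply: iT_bound hp _.
have hin : inV k (M + 1) by move: hM; rewrite /inV; lia.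
apply: NNPP => hn; have := hmax _ hin hn; lia.
Qed.

Lemma get_min k n h m : (0 < k)%N -> hitp k n h -> iT k n 0 ->
  inV k m -> (forall y, inV k y -> ~ iT k n y -> m <= y) -> ~ iT k n m ->
  1 <= m /\ exists a, [/\ (a <= h)%N, it k n a k%:Z = m - 1 &
     forall j, (j < a)%N -> it k n j k%:Z != zz k n].
Proof.
move=> hk hp h0 hm hmin hnm.
have n1 := notT_ne hnm h0.
have hle : 1 <= m by move: hm; rewrite /inV; lia.
split => //; apply: iT_bound hp _.
have hin : inV k (m - 1) by move: hm; rewrite /inV; lia.
apply: NNPP => hn; have := hmin _ hin hn; lia.
Qed.

Lemma BA k n : (0 < k)%N -> iT k n (k%:Z - 1) -> iT k n (res (n - 3) k.+1) -> ~ has_cycle n k.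
Proof.
move=> hk hk1 hr hc.
have [m [M [[hm hnm] hmin [hM hnM] hmax]]] := ex_min_max hk (cyc_notT hk hc).
have [h hp] := hit n hk.
have [hle [b [hb eb _]]] := get_max hk hp hk1 hM hmax hnM.
have := chain_up hk hp hk1 hM hnM eb hb (leqnn _).
rewrite -eb -itD subnK // (proj1 hp).
have [hy1 hy2 _] := U_orbit (h - b) hk hM hnM => ez.
have hz1 : 1 <= zz k n by move: hy2; rewrite /inV; lia.
apply: hy1; have -> : it k n (h - b) M = zz k n - 1 by lia.
by rewrite -resm3.
Qed.

Lemma CA k n : (0 < k)%N -> iT k n 0 -> iT k n (res (n - 1) k.+1) -> ~ has_cycle n k.
Proof.
move=> hk h0 hr hc.
have [m [M [[hm hnm] hmin [hM hnM] hmax]]] := ex_min_max hk (cyc_notT hk hc).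
have [h hp] := hit n hk.
have [hle [a [ha ea _]]] := get_min hk hp h0 hm hmin hnm.
have := chain_down hk hp h0 hm hnm ea ha (leqnn _).
rewrite -ea -itD subnK // (proj1 hp).
have [hy1 hy2 _] := U_orbit (h - a) hk hm hnm => ez.
have hz1 : zz k n <= k%:Z - 1 by move: hy2; rewrite /inV; lia.
apply: hy1; have -> : it k n (h - a) m = zz k n + 1 by lia.
by rewrite -resm1.
Qed.

Lemma DA k n : (0 < k)%N -> iT k n 0 -> iT k n (k%:Z - 1) -> ~ has_cycle n k.
Proof.
move=> hk h0 hk1 hc.
have [m [M [[hm hnm] hmin [hM hnM] hmax]]] := ex_min_max hk (cyc_notT hk hc).
have [h hp] := hit n hk.
have [hle [b [hb eb _]]] := get_max hk hp hk1 hM hmax hnM.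
have [hle' [a [ha ea _]]] := get_min hk hp h0 hm hmin hnm.
case: (leqP b a) => hab.
- have hs : (a - b <= h - b)%N by lia.
  have := chain_up hk hp hk1 hM hnM eb hb hs.
  rewrite -eb -itD subnK // ea.
  have [hy1 hy2 _] := U_orbit (a - b) hk hM hnM => ey.
  have := hmin _ hy2 hy1; lia.
- have hs : (b - a <= h - a)%N by lia.
  have hab' : (a <= b)%N by lia.
  have := chain_down hk hp h0 hm hnm ea ha hs.
  rewrite -ea -itD subnK // eb.
  have [hy1 hy2 _] := U_orbit (b - a) hk hm hnm => ey.
  have := hmax _ hy2 hy1; lia.
Qed.

Unset Implicit Arguments.
Theorem lemma3p7 (k : nat) (n : int) (hk : (1 <= k)%N) :
  [<-> ~ has_cycle n k;
       in_tail n k (k%:Z - 1) /\ in_tail n k (res (n - 3) k.+1);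
       in_tail n k 0 /\ in_tail n k (res (n - 1) k.+1);
       in_tail n k 0 /\ in_tail n k (k%:Z - 1)].
Proof.
have T := tail_iff n _ hk.
have r1 : inV k (res (n - 3) k.+1) by have := res_bounds (n - 3) (ltn0Sn k); rewrite /inV; lia.
have r2 : inV k (res (n - 1) k.+1) by have := res_bounds (n - 1) (ltn0Sn k); rewrite /inV; lia.
have r3 : inV k (k%:Z - 1) by rewrite /inV; lia.
have r4 : inV k 0 by rewrite /inV; lia.
tfae.
- by move=> hA; rewrite !T; split; [exact: (all_tail hk hA r3) | exact: (all_tail hk hA r1)].
- rewrite !T => -[p q]; have hA := BA hk p q.
  by split; [exact: (all_tail hk hA r4) | exact: (all_tail hk hA r2)].
- rewrite !T => -[p q]; have hA := CA hk p q.
  by split; [exact: (all_tail hk hA r4) | exact: (all_tail hk hA r3)].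
- by rewrite !T => -[p q]; apply: DA hk p q.
Qed.
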